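(* Let $D_{a+}$ and $D_{a-}$ be knot diagrams that differ only at one crossing $a$, which is positive in $D_{a+}$ and negative in $D_{a-}$, and let $D^a$ be their common smoothing at $a$. Then $$H(D_{a+})-H(D_{a-})=-4\,lk(D^a).$$
   Context: A knot diagram is a generic oriented immersed circle in $S^2$ with over/under information at each crossing; crossing signs are given by the right-hand rule. For a crossing $a$, the smoothing $D^a$ is the two-component oriented link obtained by the orientation-preserving cut-and-paste at $a$, and $lk$ is the linking number of its components. Let $\mathbb{G}_{\mathbb{Z}}$ be the free abelian group on $\{X_n,Y_n\}_{n\in\mathbb{Z}}$, $I_{lk}(D)=\sum_{a\text{ positive}}X_{lk(D^a)}+\sum_{a\text{ negative}}Y_{lk(D^a)}$, $h:\mathbb{G}_{\mathbb{Z}}\to\mathbb{Z}$ the homomorphism with $h(X_n)=-n$, $h(Y_n)=n$, and $H(D)=h(I_{lk}(D))$ (minus the ''cowrithe''). *)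

(* Defs.v *)
(* Knot diagrams on S^2 are modelled combinatorially by
   signed Gauss diagrams that are realizable on S^2 (genus 0). *)
From HB Require Import structures.
From mathcomp Require Import all_boot all_order all_algebra.
Set Implicit Arguments. Unset Strict Implicit. Unset Printing Implicit Defensive.
Import Order.TTheory GRing.Theory Num.Theory.

(* A (signed, decorated) Gauss code with [m] passage points.
   Walking along the oriented knot, one meets the points 0, 1, ..., m-1
   (cyclically, m-1 is followed by 0).  Every crossing is passed twice:
   [gmate p] is the other passage through the crossing of passage [p],
   [gover p] says whether the passage [p] is the over-strand, and
   [gpos p] says whether the crossing of [p] is positive (right-hand rule). *)
Record gcode (m : nat) := GCode {
  gmate : 'I_m -> 'I_m ;
  gover : 'I_m -> bool ;
  gpos  : 'I_m -> bool }.

Definition gcode_wf m (D : gcode m) : Prop :=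
  forall p : 'I_m,
    [/\ gmate D (gmate D p) = p, gmate D p != p,
        gover D (gmate D p) = ~~ gover D p & gpos D (gmate D p) = gpos D p].

(* ---- The underlying 4-valent graph on the oriented sphere/surface ----
   Darts: (p, true) = outgoing half-edge at passage p (start of the edge
   from p to p+1), (p, false) = incoming half-edge at passage p (end of
   the edge from p-1 to p). *)
Definition dart m := ('I_m * bool)%type.

Definition dalpha m (d : dart m) : dart m :=
  if d.2 then (ordS d.1, false) else (ord_pred d.1, true).

(* counterclockwise rotation at a crossing with over passage o, under
   passage u:  positive: o_out -> u_out -> o_in -> u_in -> o_out
               negative: o_out -> u_in -> o_in -> u_out -> o_out *)
Definition dsigma m (D : gcode m) (d : dart m) : dart m :=
  let r := d.1 in
  if gover D r then (gmate D r, if gpos D r then d.2 else ~~ d.2)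
  else (gmate D r, if gpos D r then ~~ d.2 else d.2).

Definition dphi m (D : gcode m) (d : dart m) : dart m := dsigma D (dalpha d).

Definition nfaces m (D : gcode m) : nat := fcard (dphi D) (@predT (dart m)).

(* Realizable on S^2: Euler characteristic V - E + F = 2 with
   V = m/2 crossings and E = m edges (the crossingless diagram is planar). *)
Definition planar m (D : gcode m) : bool :=
  (m == 0%N) || (nfaces D == (m./2 + 2)%N).

Definition knot_diagram m (D : gcode m) : Prop := gcode_wf D /\ planar D.

(* [in_arc i j r]: r lies strictly after i and strictly before j, going
   forward along the knot from i. *)
Definition in_arc m (i j r : 'I_m) : bool :=
  let d (x : 'I_m) := ((x + m - i) %% m)%N in (0 < d r < d j)%N.

Definition sgnz m (D : gcode m) (q : 'I_m) : int := if gpos D q then 1%R else (-1)%R.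

(* The smoothing D^a at the crossing a of passage p has the two components
   "arc from p to gmate p" and "arc from gmate p to p"; its crossings are the
   crossings of D other than a, with the same signs.  A crossing (indexed by
   its over passage q) is between different components iff exactly one of its
   passages lies on the first arc.  lk = (sum of signs of such crossings)/2. *)
Definition mixed_sum m (D : gcode m) (p : 'I_m) : int :=
  (\sum_(q : 'I_m | [&& gover D q, q != p, q != gmate D p &
                      in_arc p (gmate D p) q != in_arc p (gmate D p) (gmate D q)])
     sgnz D q)%R.

Definition lk_smooth m (D : gcode m) (p : 'I_m) : int := (mixed_sum D p %/ 2)%Z.

Inductive gen := X of int | Y of int.

Definition h_gen (g : gen) : int := match g with X n => (- n)%R | Y n => n end.

(* I_lk(D), written as the formal sum (list of generators) gover the crossings
   of D, each crossing being indexed by its over passage. *)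
Definition I_lk m (D : gcode m) : seq gen :=
  [seq (if gpos D q then X (lk_smooth D q) else Y (lk_smooth D q))
  | q <- enum 'I_m & gover D q].

Definition h_sum (s : seq gen) : int := (\sum_(g <- s) h_gen g)%R.

Definition H m (D : gcode m) : int := h_sum (I_lk D).

(* Main.v *)
Require Import Defs.
From HB Require Import structures.
From mathcomp Require Import all_boot all_order all_algebra.
From Stdlib Require Import Lia.
Import Order.TTheory GRing.Theory Num.Theory.

Ltac tolia := repeat match goal with
 | H : (leq _ _) = false |- _ => move/negbT in H; rewrite -ltnNge in H
 | H : (@eq_op _ _ _) = false |- _ => move/negbT in H
 | H : (@eq_op _ _ _) = true |- _ => move/eqP in H
 | H : is_true (leq _ _) |- _ => move/ssrnat.leP in H
 | H : is_true (@eq_op _ _ _) |- _ => move/eqP in H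
 | H : is_true (negb (@eq_op _ _ _)) |- _ => move/eqP in H
 | |- is_true (leq _ _) => apply/ssrnat.leP
 | |- (leq _ _) = true => apply/ssrnat.leP
 | |- (leq _ _) = false => apply/negbTE; rewrite -ltnNge; apply/ssrnat.leP
 end; unfold addn, subn, muln in *; lia.

Ltac bcase := match goal with
 | |- context [leq ?a ?b] => case: (leqP a b) => ?
 end.

Ltac bsolve := repeat (bcase; rewrite /=); first [done | exfalso; tolia].

Definition cyc (a b c : nat) : bool := [|| (a < b) && (b < c), (b < c) && (c < a) | (c < a) && (a < b)].

Lemma dval m (x r : 'I_m) : (r + m - x) %% m = if x <= r then r - x else r + m - x.
Proof.
have := ltn_ord r; have := ltn_ord x.
case: (leqP x r) => h hx hr.
  have -> : r + m - x = (r - x) + m by tolia.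
  by rewrite modnDr modn_small //; tolia.
by rewrite modn_small //; tolia.
Qed.

Lemma in_arc_cyc m (x y z : 'I_m) : x != y -> y != z -> x != z ->
  in_arc x y z = cyc x z y.
Proof.
rewrite /in_arc !dval -!(inj_eq val_inj) /cyc => h1 h2 h3.
have := ltn_ord y; have := ltn_ord z; have := ltn_ord x.
move: (nat_of_ord x) (nat_of_ord y) (nat_of_ord z) h1 h2 h3 => a b c h1 h2 h3 ha hc hb.
case: (leqP a c) => h4; case: (leqP a b) => h5; bsolve.
Qed.

Lemma cyc_rev a b c : a != b -> b != c -> a != c -> cyc c b a = ~~ cyc a b c.
Proof. rewrite /cyc => h1 h2 h3; bsolve. Qed.

Lemma cyc_inter a b c d : a != b -> a != c -> a != d -> b != c -> b != d -> c != d ->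
  (cyc c a d != cyc c b d) = (cyc a c b != cyc a d b).
Proof. rewrite /cyc => h1 h2 h3 h4 h5 h6; bsolve. Qed.

Section Par.
Local Open Scope ring_scope.
Lemma sum_par (I : Type) (r : seq I) (P : pred I) (F : I -> int) :
  (forall i, F i = 1 \/ F i = -1) ->
  exists K : int, \sum_(i <- r | P i) F i = K * 2 + ((\big[addb/false]_(i <- r | P i) true : bool) : nat)%:Z.
Proof.
move=> HF; elim: r => [|a r [K IH]]; first by exists 0; rewrite !big_nil.
rewrite !big_cons; case: (P a); last by exists K.
rewrite IH; case: (HF a) => ->; case: (\big[addb/false]_(j <- r | P j) true) => /=.
- exists (K + 1); rewrite addr0 mulrDl mul1r addrCA; by [].
- exists K; by rewrite addr0 addrC.
- exists K; by rewrite addr0 addrCA addNr addr0.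
- exists (K - 1); rewrite addr0 mulrBl mul1r -addrA (_ : -2 + 1 = -1) //; by rewrite addrC.
Qed.
End Par.
Section Planar.
Variables (m : nat) (D : gcode m).
Hypothesis wf : gcode_wf D.

Local Notation sg := (dsigma D).
Local Notation al := (@dalpha m).
Local Notation ph := (dphi D).
Local Notation mate := (gmate D).

Lemma mateK r : mate (mate r) = r. Proof. by case: (wf r). Qed.
Lemma mate_neq r : mate r != r. Proof. by case: (wf r). Qed.
Lemma over_mate r : gover D (mate r) = ~~ gover D r. Proof. by case: (wf r). Qed.
Lemma pos_mate r : gpos D (mate r) = gpos D r. Proof. by case: (wf r). Qed.
Lemma mate_inj : injective mate. Proof. exact: (can_inj mateK). Qed.

Lemma sg_fst d : (sg d).1 = mate d.1. Proof. by rewrite /dsigma; case: ifP. Qed.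

Lemma sg2 d : sg (sg d) = (d.1, ~~ d.2).
Proof.
case: d => r b; rewrite /dsigma /=.
case Ho: (gover D r); case Hp: (gpos D r);
  rewrite /= over_mate pos_mate mateK Ho Hp /=; by case: b.
Qed.

Lemma sg_neg r b : sg (r, ~~ b) = ((sg (r, b)).1, ~~ (sg (r, b)).2).
Proof. rewrite /dsigma /=; by case: (gover D r); case: (gpos D r). Qed.

Lemma sg4 d : sg (sg (sg (sg d))) = d.
Proof. by rewrite !sg2 /= negbK; case: d. Qed.

Lemma sg_inj : injective sg.
Proof. apply: (can_inj (g := fun x => sg (sg (sg x)))) => x; exact: sg4. Qed.

Lemma alK : involutive al.
Proof. by case=> r [] /=; rewrite /dalpha /= ?ordSK ?ord_predK. Qed.

Lemma ph_inj : injective ph.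
Proof. move=> x y; rewrite /dphi => /sg_inj; exact: (inv_inj alK). Qed.

Lemma ph_al x : ph (al x) = sg x.
Proof. by rewrite /dphi alK. Qed.

Lemma fsym : connect_sym (frel ph).
Proof. exact: (fconnect_sym ph_inj). Qed.

Lemma froot_ph x : froot ph (ph x) = froot ph x.
Proof. apply/esym/(fingraph.rootP fsym); exact: fconnect1. Qed.

Lemma froot_al x : froot ph (al x) = froot ph (sg x).
Proof. by rewrite -(froot_ph (al x)) ph_al. Qed.

Lemma val_ordS (r : 'I_m) : val (ordS r) = r.+1 %% m. Proof. by []. Qed.

Lemma iter_ordS k (r : 'I_m) : val (iter k (@ordS m) r) = (r + k) %% m.
Proof.
elim: k => [|k IH] /=; first by rewrite addn0 modn_small.
by rewrite IH -addn1 modnDml addn1 addnS.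
Qed.

Lemma const_cyc (f : 'I_m -> bool) : (forall r, f (ordS r) = f r) -> forall r s, f r = f s.
Proof.
move=> H r s.
have Hk : forall k x, f (iter k (@ordS m) x) = f x.
  by elim=> [|k IH] x //=; rewrite H IH.
have -> : r = iter (r + m - s) (@ordS m) s.
  apply/val_inj; rewrite iter_ordS.
  have -> : s + (r + m - s) = r + m by move: (ltn_ord s) => ?; tolia.
  by rewrite modnDr modn_small.
exact: Hk.
Qed.

Lemma vsum (c : dart m -> bool) x :
  c x (+) c (sg x) (+) c (sg (sg x)) (+) c (sg (sg (sg x))) =
  (c (x.1, false) (+) c (x.1, true)) (+) (c (mate x.1, false) (+) c (mate x.1, true)).
Proof.
case: x => r b; rewrite sg2 /=.
have -> : sg (r, ~~ b) = ((sg (r, b)).1, ~~ (sg (r, b)).2) by exact: sg_neg.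
have E : sg (r, b) = (mate r, (sg (r, b)).2) by rewrite /dsigma /=; case: ifP.
rewrite E /=; move: (sg (r, b)).2 => b'; clear E.
case: b; case: b' => /=;
  by case: (c (r, true)); case: (c (r, false)); case: (c (mate r, true)); case: (c (mate r, false)).
Qed.


Definition Wset : pred {ffun dart m -> bool} :=
  [pred c : {ffun dart m -> bool} | [forall x, c (al x) == c x] &&
     [forall x, c x (+) c (sg x) (+) c (sg (sg x)) (+) c (sg (sg (sg x))) == false]].

Lemma W_vert c : c \in Wset -> forall s,
  c (s,false) (+) c (s,true) = c (mate s, false) (+) c (mate s, true).
Proof.
move=> /andP[_ /forallP H] s; move: (H (s, true)); rewrite (vsum c (s, true)) /=.
move: (c (s, false) (+) c (s, true)) (c (mate s, false) (+) c (mate s, true)).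
by case; case.
Qed.

Lemma W_al c : c \in Wset -> forall x, c (al x) = c x.
Proof. by move=> /andP[/forallP H _] x; apply/eqP. Qed.

Definition Rp (d0 : dart m) : pred (dart m) :=
  [pred x | (froot ph x == x) && (x != froot ph d0)].

Definition Psi (h : {ffun dart m -> bool}) : {ffun dart m -> bool} :=
  [ffun x => h (froot ph x) (+) h (froot ph (sg x))].

Lemma Psi_W h : Psi h \in Wset.
Proof.
apply/andP; split; apply/forallP => x; rewrite !ffunE.
  by rewrite froot_al -/(dphi D x) froot_ph addbC.
rewrite sg4; move: (h (froot ph x)) (h (froot ph (sg x))) (h (froot ph (sg (sg x))))
  (h (froot ph (sg (sg (sg x))))).
by do 4 case.
Qed.

Lemma conn_const (k : dart m -> bool) :
  (forall x, k (ph x) = k x) -> (forall x, k (sg x) = k x) -> forall x y, k x = k y.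
Proof.
move=> H1 H2.
have Hal : forall x, k (al x) = k x.
  by move=> x; rewrite -(H2 x) -ph_al H1.
have Hb : forall x, k x = k (x.1, true).
  move=> [r b]; case: b => //=.
  by rewrite -(H2 (r, false)) -(H2 (sg (r, false))) sg2.
have Hc : forall r s, k (r, true) = k (s, true).
  apply: (@const_cyc (fun r => k (r, true))) => r.
  have -> : (ordS r, true) = sg (sg (al (r, true))) by rewrite sg2.
  by rewrite !H2 Hal.
by move=> x y; rewrite Hb (Hb y) (Hc x.1 y.1).
Qed.

Lemma Psi_inj d0 : {in pffun_on false (Rp d0) predT &, injective Psi}.
Proof.
move=> h1 h2 /pffun_onP[/supportP S1 _] /pffun_onP[/supportP S2 _] E.
pose k x := h1 (froot ph x) (+) h2 (froot ph x).
have K1 : forall x, k (ph x) = k x by move=> x; rewrite /k froot_ph.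
have K2 : forall x, k (sg x) = k x.
  move=> x; have := congr1 (fun f : {ffun _ -> _} => f x) E; rewrite !ffunE /k.
  move: (h1 (froot ph x)) (h1 (froot ph (sg x))) (h2 (froot ph x)) (h2 (froot ph (sg x))).
  by do 4 case.
have K0 : forall x, k x = false.
  move=> x; rewrite (@conn_const k K1 K2 x d0) /k S1 ?S2 //;
  by rewrite inE negb_and eqxx orbT.
apply/ffunP => y.
case Hy: (y \in Rp d0); last by rewrite S1 ?S2 ?Hy.
move: Hy; rewrite inE => /andP[/eqP Ry _].
by move: (K0 y); rewrite /k Ry; case: (h1 y); case: (h2 y).
Qed.

Definition kap (b : 'I_m) (c : {ffun dart m -> bool}) : {ffun 'I_m -> bool} :=
  [ffun s => if gover D s then c (s, false) (+) c (s, true) else (s == b) && c (s, true)].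

Lemma kap_inj b : ~~ gover D b -> {in Wset &, injective (kap b)}.
Proof.
move=> Hb c1 c2 W1 W2 E.
have Ew : forall s, (c1 (s, false) (+) c1 (s, true)) = (c2 (s, false) (+) c2 (s, true)).
  have Eo : forall s, gover D s -> (c1 (s, false) (+) c1 (s, true)) = (c2 (s, false) (+) c2 (s, true)).
    by move=> s Hs; have := congr1 (fun f : {ffun _ -> _} => f s) E; rewrite !ffunE Hs.
  move=> s; case Hs: (gover D s); first exact: Eo.
  rewrite (@W_vert c1 W1) (@W_vert c2 W2); apply: Eo; by rewrite over_mate Hs.
have Fal : forall c, c \in Wset -> forall r, c (r, false) = c (ord_pred r, true).
  by move=> c Wc r; rewrite -[RHS](@W_al c Wc) /dalpha /= ord_predK.
pose e r := c1 (r, true) (+) c2 (r, true).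
have He : forall r, e (ordS r) = e r.
  move=> r; move: (Ew (ordS r)); rewrite (Fal _ W1) (Fal _ W2) ordSK /e.
  move: (c1 (r, true)) (c2 (r, true)) (c1 (ordS r, true)) (c2 (ordS r, true)).
  by do 4 case.
have eb : e b = false.
  have := congr1 (fun f : {ffun _ -> _} => f b) E; rewrite !ffunE (negbTE Hb) eqxx /= /e => ->.
  by rewrite addbb.
have Et : forall r, c1 (r, true) = c2 (r, true).
  move=> r; move: (@const_cyc e He r b); rewrite eb /e.
  by case: (c1 (r, true)); case: (c2 (r, true)).
apply/ffunP => [[r []]]; first exact: Et.
by rewrite (Fal _ W1) (Fal _ W2) Et.
Qed.

Lemma kap_on b c : kap b c \in pffun_on false [pred s | gover D s || (s == b)] predT.
Proof.
apply/pffun_onP; split => //.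
apply/supportP => s; rewrite inE negb_or => /andP[Ho Hs].
by rewrite ffunE (negbTE Ho) (negbTE Hs).
Qed.

Lemma card_over : #|[pred s | gover D s]| = m./2.
Proof.
set O := [set s | gover D s].
have E1 : #|[pred s | gover D s]| = #|O| by apply: eq_card => s; rewrite /O !inE.
have E2 : mate @^-1: O = ~: O by apply/setP => s; rewrite /O !inE over_mate.
have E3 : #|~: O| = #|O| by rewrite -E2 card_preimset //; exact: mate_inj.
have := cardsC O; rewrite E3 card_ord addnn => Hm.
have -> : m./2 = (#|O|.*2)./2 by rewrite Hm.
by rewrite doubleK E1.
Qed.

Lemma card_Q b : ~~ gover D b -> #|[pred s | gover D s || (s == b)]| = m./2.+1.
Proof.
move=> Hb; rewrite (cardD1 b) inE eqxx orbT add1n -card_over.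
congr (_.+1); apply: eq_card => s; rewrite !inE.
by case: eqP => [->|] //=; rewrite ?(negbTE Hb) ?orbF.
Qed.

Lemma card_P d0 : #|pffun_on false (Rp d0) predT| = 2 ^ (nfaces D).-1.
Proof.
rewrite card_pffun_on card_bool; congr (_ ^ _).
rewrite /nfaces /n_comp_mem [in RHS](cardD1 (froot ph d0)).
rewrite inE /= (fingraph.roots_root fsym) /=.
apply: eq_card => x; rewrite !inE /=.
by rewrite andbT andbC.
Qed.

Lemma surjW b : ~~ gover D b -> planar D -> 0 < m -> forall c, c \in Wset ->
  exists g : dart m -> bool, (forall x, g (ph x) = g x) /\ (forall x, g x (+) g (sg x) = c x).
Proof.
move=> Hb Hpl Hm c Wc.
set P := pffun_on false (Rp (b, true)) predT.
have sub1 : Psi @: P \subset Wset by apply/subsetP => _ /imsetP[h _ ->]; exact: Psi_W.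
have cP : #|Psi @: P| = #|P| := card_in_imset (@Psi_inj (b, true)).
have cW : #|Wset| <= #|P|.
  rewrite card_P.
  have F : nfaces D = m./2 + 2 by move: Hpl; rewrite /planar eqn0Ngt Hm /= => /eqP.
  rewrite F addn2 /= -(@card_Q b Hb) -(card_in_imset (@kap_inj b Hb)).
  have := card_pffun_on false [pred s | gover D s || (s == b)] (@predT bool).
  rewrite card_bool => <-; apply: subset_leq_card; apply/subsetP => _ /imsetP[c' _ ->].
  exact: kap_on.
have := geq_leqif (subset_leqif_card sub1); rewrite cP cW.
move=> /esym/subsetP/(_ c Wc)/imsetP[h _ ->].
exists (fun x => h (froot ph x)); split => x; first by rewrite froot_ph.
by rewrite ffunE.
Qed.

Definition dd (p r : 'I_m) : nat := (r + m - p) %% m.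
Definition cf (p : 'I_m) : {ffun dart m -> bool} :=
  [ffun x => dd p (if x.2 then x.1 else ord_pred x.1) < dd p (mate p)].

Lemma val_pred (r : 'I_m) : val (ord_pred r) = if val r == 0 then m.-1 else (val r).-1.
Proof.
have hr := ltn_ord r; rewrite /= ; case: eqP => [->|h].
  by rewrite add0n modn_small //; tolia.
have -> : (r + m).-1 = (r.-1) + m by tolia.
by rewrite modnDr modn_small //; tolia.
Qed.

Lemma dd_lt p r : dd p r < m.
Proof. by rewrite /dd ltn_pmod //; move: (ltn_ord p) => ?; tolia. Qed.

Lemma dd_pp p : dd p p = 0.
Proof. by rewrite /dd dval leqnn subnn. Qed.

Lemma dd_inj p r s : dd p r = dd p s -> r = s.
Proof.
move: (ltn_ord p) (ltn_ord r) (ltn_ord s) => hp hr hs.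
rewrite /dd !dval => H; apply/val_inj => /=; move: H.
by case: (leqP p r) => ?; case: (leqP p s) => ? ? ; tolia.
Qed.

Lemma dd_pred p r : dd p (ord_pred r) = if r == p then m.-1 else (dd p r).-1.
Proof.
move: (ltn_ord p) (ltn_ord r) => hp hr.
rewrite /dd !dval val_pred -(inj_eq val_inj) /=.
case: (leqP p r) => ?; case: (ltngtP r p) => ?; case: eqP => ?; 
  try (case: ifP => ?); tolia.
Qed.

Lemma dd_neq p r s : r != s -> dd p r != dd p s.
Proof. by apply: contra => /eqP /dd_inj ->. Qed.
Arguments dd_neq p {r s}.

Lemma in_arc_dd p u s : in_arc p u s = (0 < dd p s < dd p u).
Proof. by []. Qed.

Lemma cf_in p s b : s != p -> s != mate p -> cf p (s, b) = in_arc p (mate p) s.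
Proof.
move=> h1 h2; rewrite in_arc_dd ffunE /=.
have n1 := dd_neq p h1; have n2 := dd_neq p h2; rewrite dd_pp in n1.
case: b; rewrite /= ?dd_pred ?(negbTE h1);
move: (dd p s) (dd p (mate p)) n1 n2 => a c n1 n2; bsolve.
Qed.

Lemma cf_pt p : cf p (p, true) = true.
Proof.
rewrite ffunE /= dd_pp; have := dd_neq p (mate_neq p); rewrite dd_pp => h; tolia.
Qed.

Lemma cf_pf p : cf p (p, false) = false.
Proof. by rewrite ffunE /= dd_pred eqxx; have := dd_lt p (mate p) => h; apply/negbTE; rewrite -leqNgt; tolia. Qed.

Lemma cf_ut p : cf p (mate p, true) = false.
Proof. by rewrite ffunE /= ltnn. Qed.

Lemma cf_uf p : cf p (mate p, false) = true.
Proof.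
rewrite ffunE /= dd_pred (negbTE (mate_neq p)).
have := dd_neq p (mate_neq p); rewrite dd_pp => h; tolia.
Qed.

Lemma mate_eq r s : (mate r == s) = (r == mate s).
Proof. by apply/eqP/eqP => [<-|->]; rewrite mateK. Qed.

Lemma Wv p s : cf p (s, false) (+) cf p (s, true) = (s == p) || (s == mate p).
Proof.
case: (eqVneq s p) => [->|h1]; first by rewrite cf_pf cf_pt.
case: (eqVneq s (mate p)) => [->|h2]; first by rewrite cf_uf cf_ut orbT.
by rewrite !cf_in // addbb.
Qed.

Lemma cf_al p x : cf p (al x) = cf p x.
Proof. by case: x => r [] /=; rewrite !ffunE /= ?ordSK. Qed.

Lemma cf_W p : cf p \in Wset.
Proof.
apply/andP; split; apply/forallP => x; first by rewrite cf_al.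
rewrite (vsum (cf p) x) !Wv !mate_eq mateK.
by case: (x.1 == p); case: (x.1 == mate p).
Qed.

Lemma mixed_even p : planar D -> exists K : int, mixed_sum D p = (K * 2)%R.
Proof.
move=> Hpl.
have hu : mate p != p := mate_neq p.
have m0 : 0 < m by move: (ltn_ord p) => ?; tolia.
pose b := if gover D p then mate p else p.
have Hb : ~~ gover D b by rewrite /b; case: ifP => h; rewrite ?over_mate ?h.
have [g [Hg1 Hg2]] := @surjW b Hb Hpl m0 _ (cf_W p).
pose t s := cf p (sg (s, false)).
pose G r := g (r, true).
have HG : forall r, G (ordS r) = G r (+) t (ordS r).
  move=> r; rewrite /G /t.
  have e2 : g (sg (ordS r, false)) = g (r, true).
    by rewrite -[sg (ordS r, false)]/(ph (r, true)) Hg1.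
  have := Hg2 (sg (ordS r, false)); rewrite sg2 /= e2 => <-.
  by case: (g (r, true)); case: (g (ordS r, true)).
have Htel : \big[addb/false]_(s : 'I_m) t s = false.
  rewrite (reindex_inj (@ordS_inj m)) /=.
  rewrite (eq_bigr (fun r => G (ordS r) (+) G r)); last first.
    by move=> r _; rewrite HG; case: (G r); case: (t (ordS r)).
  rewrite big_split /=.
  have RG : \big[addb/false]_(r : 'I_m) G (ordS r) = \big[addb/false]_(r : 'I_m) G r.
    exact: (esym (reindex_inj (@ordS_inj m))).
  by rewrite RG addbb.
have hu' : predT (mate p) && (mate p != p) by rewrite /= hu.
move: Htel; rewrite (bigD1 p) // (bigD1 (mate p) hu').
have tpu : t p (+) t (mate p) = false.
  rewrite /t /dsigma /= over_mate pos_mate mateK.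
  by case: (gover D p); case: (gpos D p); rewrite /= ?cf_pt ?cf_pf ?cf_ut ?cf_uf.
move=> Htel.
have X0 : t p (+) (t (mate p) (+) \big[addb/false]_(i | (predT i && (i != p)) && (i != mate p)) t i) = false.
  exact: Htel.
rewrite addbA tpu /= in X0.
rewrite (eq_bigr (fun i => in_arc p (mate p) (mate i))) in X0; last first.
  move=> i /andP[h1 h2]; rewrite /t.
  have E : sg (i, false) = (mate i, (sg (i, false)).2) by rewrite /dsigma; case: ifP.
  by rewrite E cf_in // mate_eq ?mateK.
rewrite (bigID (fun i => gover D i)) /= in X0.
have R2 : \big[addb/false]_(i | ((i != p) && (i != mate p)) && ~~ gover D i)
            in_arc p (mate p) (mate i) =
          \big[addb/false]_(i | ((i != p) && (i != mate p)) && gover D i)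
            in_arc p (mate p) i.
  rewrite (reindex_inj mate_inj); apply: eq_big => i; last by rewrite mateK.
  by rewrite /= !mate_eq mateK over_mate negbK [(i != mate p) && _]andbC.
rewrite R2 -big_split /= in X0.
have [K HK] := @sum_par _ (index_enum 'I_m)
  (fun q => [&& gover D q, q != p, q != gmate D p &
               in_arc p (gmate D p) q != in_arc p (gmate D p) (gmate D q)])
  (sgnz D) (fun i => ltac:(rewrite /sgnz; case: (gpos D i); [left|right]; done)).
exists K; rewrite /mixed_sum HK.
suff -> : \big[addb/false]_(i <- index_enum 'I_m | [&& gover D i, i != p, i != gmate D p &
               in_arc p (gmate D p) i != in_arc p (gmate D p) (gmate D i)]) true = false.
  by rewrite addr0.
rewrite -[RHS]X0.
rewrite (eq_bigl (fun i => (((i != p) && (i != mate p)) && gover D i) &&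
   (in_arc p (mate p) i != in_arc p (mate p) (mate i)))); last first.
  by move=> i /=; case: (gover D i); case: (i != p); case: (i != mate p).
rewrite big_mkcondr; apply: eq_bigr => i _.
by case: (in_arc p (mate p) i); case: (in_arc p (mate p) (mate i)).
Qed.

End Planar.

Lemma in_arc_rev m (x y z : 'I_m) : x != y -> y != z -> x != z ->
  in_arc y x z = ~~ in_arc x y z.
Proof.
move=> h1 h2 h3; rewrite !in_arc_cyc // 1?eq_sym //.
by apply: cyc_rev; rewrite (inj_eq val_inj) // eq_sym.
Qed.

Lemma in_arc_inter m (p u q w : 'I_m) : p != u -> p != q -> p != w -> u != q -> u != w -> q != w ->
  (in_arc q w p != in_arc q w u) = (in_arc p u q != in_arc p u w).
Proof.
move=> h1 h2 h3 h4 h5 h6.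
have h2' : q != p by rewrite eq_sym.
have h3' : w != p by rewrite eq_sym.
have h4' : q != u by rewrite eq_sym.
have h5' : w != u by rewrite eq_sym.
rewrite !in_arc_cyc //.
by apply: cyc_inter; rewrite (inj_eq val_inj).
Qed.

Section Main.
Local Open Scope ring_scope.

Lemma H_eq m (D : gcode m) : H D = - \sum_(q | gover D q) sgnz D q * lk_smooth D q.
Proof.
rewrite /H /h_sum /I_lk big_map big_filter big_enum_cond -sumrN.
apply: eq_big => q; first by rewrite inE.
move=> _; rewrite /sgnz; case: (gpos D q) => /=; by rewrite ?mul1r ?mulN1r ?opprK.
Qed.

Lemma split_pu m (F : 'I_m -> int) (p u : 'I_m) : u != p ->
  \sum_q F q = F p + F u + \sum_(q | (q != p) && (q != u)) F q.
Proof.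
move=> hu; rewrite (bigD1 p) //= (bigD1 u) ?hu //= addrA.
congr (_ + _); apply: eq_bigl => i.
Qed.

End Main.

Section Main2.
Local Open Scope ring_scope.

Lemma mixed_swap m (D : gcode m) (wf : gcode_wf D) p :
  mixed_sum D (gmate D p) = mixed_sum D p.
Proof.
rewrite /mixed_sum (@mateK _ _ wf p); apply: eq_bigl => q.
have hu := @mate_neq _ _ wf p.
case: (eqVneq q p) => [->|h1]; first by rewrite ?eqxx /= ?andbF.
case: (eqVneq q (gmate D p)) => [->|h2]; first by rewrite ?eqxx /= ?andbF.
have hu' : p != gmate D p by rewrite eq_sym.
have h1' : p != q by rewrite eq_sym.
have h2' : gmate D p != q by rewrite eq_sym.
have h3 : p != gmate D q by rewrite eq_sym (@mate_eq _ _ wf).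
have h4 : gmate D p != gmate D q by rewrite eq_sym (@mate_eq _ _ wf) (@mateK _ _ wf).
rewrite /= !(@in_arc_rev _ p (gmate D p)) //.
by case: (in_arc p (gmate D p) q); case: (in_arc p (gmate D p) (gmate D q)).
Qed.

Lemma lk_diff m (D1 D2 : gcode m) (p q : 'I_m) :
  gcode_wf D1 -> gcode_wf D2 ->
  (forall q, gmate D2 q = gmate D1 q) ->
  (forall q, q != p -> q != gmate D1 p ->
     gover D2 q = gover D1 q /\ gpos D2 q = gpos D1 q) ->
  gover D2 p = ~~ gover D1 p ->
  gpos D1 p = true -> gpos D2 p = false ->
  q != p -> q != gmate D1 p ->
  lk_smooth D1 q - lk_smooth D2 q =
    ((in_arc p (gmate D1 p) q != in_arc p (gmate D1 p) (gmate D1 q)) : nat)%:Z.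
Proof.
move=> wf1 wf2 Hmate Hoth Hov Hp1 Hp2 hqp hqu.
have hu := @mate_neq _ _ wf1 p.
have hq'p : gmate D1 q != p by rewrite (@mate_eq _ _ wf1).
have hq'u : gmate D1 q != gmate D1 p by rewrite (inj_eq (@mate_inj _ _ wf1)).
have hqq' : q != gmate D1 q by rewrite eq_sym (@mate_neq _ _ wf1).
have hpq : p != q by rewrite eq_sym.
have hpq' : p != gmate D1 q by rewrite eq_sym.
have huq : gmate D1 p != q by rewrite eq_sym.
have huq' : gmate D1 p != gmate D1 q by rewrite eq_sym.
pose C (D : gcode m) r := [&& gover D r, r != q, r != gmate D1 q &
      in_arc q (gmate D1 q) r != in_arc q (gmate D1 q) (gmate D1 r)].
pose G (D : gcode m) r := if C D r then sgnz D r else 0.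
have M : forall D, (forall r, gmate D r = gmate D1 r) ->
    mixed_sum D q = G D p + G D (gmate D1 p) +
       \sum_(r | (r != p) && (r != gmate D1 p)) G D r.
  move=> D HD; rewrite /mixed_sum big_mkcond -split_pu //; apply: eq_bigr => r _.
  by rewrite /G /C !HD.
rewrite /lk_smooth (M D1) // (M D2) //.
have -> : \sum_(r | (r != p) && (r != gmate D1 p)) G D2 r =
          \sum_(r | (r != p) && (r != gmate D1 p)) G D1 r.
  apply: eq_bigr => r /andP[h1 h2]; rewrite /G /C /sgnz.
  by case: (Hoth r h1 h2) => -> ->.
set R := \sum_(r | _) G D1 r.
set Y := (in_arc q (gmate D1 q) p != in_arc q (gmate D1 q) (gmate D1 p)).
have Y' : (in_arc q (gmate D1 q) (gmate D1 p) != in_arc q (gmate D1 q) p) = Y by rewrite /Y eq_sym.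
have ov1 : gover D1 (gmate D1 p) = ~~ gover D1 p := @over_mate _ _ wf1 p.
have ov2 : gover D2 (gmate D1 p) = gover D1 p by rewrite -Hmate (@over_mate _ _ wf2) Hov negbK.
have ps1 : gpos D1 (gmate D1 p) = true by rewrite (@pos_mate _ _ wf1).
have ps2 : gpos D2 (gmate D1 p) = false by rewrite -Hmate (@pos_mate _ _ wf2).
have E1 : G D1 p + G D1 (gmate D1 p) = if Y then 1 else 0.
  rewrite /G /C hpq hpq' huq huq' (@mateK _ _ wf1) Y' -/Y /sgnz Hp1 ps1 ov1.
  by clear Y'; case: (gover D1 p); case: Y; rewrite /= ?addr0 ?add0r.
have E2 : G D2 p + G D2 (gmate D1 p) = if Y then -1 else 0.
  rewrite /G /C hpq hpq' huq huq' (@mateK _ _ wf1) Y' -/Y /sgnz Hp2 ps2 ov2 Hov.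
  by clear Y' E1; case: (gover D1 p); case: Y; rewrite /= ?addr0 ?add0r.
rewrite E1 E2.
have -> : Y = (in_arc p (gmate D1 p) q != in_arc p (gmate D1 p) (gmate D1 q)).
  by rewrite /Y in_arc_inter // eq_sym.
case: (in_arc p (gmate D1 p) q != in_arc p (gmate D1 p) (gmate D1 q)) => /=.
  have -> : 1 + R = 1 * 2 + (-1 + R) by rewrite mul1r addrA.
  by rewrite divzMDl // addrK.
by rewrite subrr.
Qed.

Lemma fin_alg (K R2 : int) : -(K + (K*2 + R2)) - -(-K + R2) = -(4 * K).
Proof.
rewrite opprK opprD addrACA opprD addrNK -!opprD; congr (- _).
by rewrite [4 * K]mulrC -{1 2}(mulr1 K) -!mulrDr.
Qed.

End Main2.

Local Open Scope ring_scope.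
Theorem proposition1 (m : nat) (D1 D2 : gcode m) (p : 'I_m) :
  knot_diagram D1 -> knot_diagram D2 ->
  (forall q, gmate D2 q = gmate D1 q) ->
  (forall q, q != p -> q != gmate D1 p ->
     gover D2 q = gover D1 q /\ gpos D2 q = gpos D1 q) ->
  gover D2 p = ~~ gover D1 p ->
  gpos D1 p = true -> gpos D2 p = false ->
  H D1 - H D2 = - (4 * lk_smooth D1 p).
Proof.
move=> [wf1 pl1] [wf2 pl2] Hmate Hoth Hov Hp1 Hp2.
have hu := @mate_neq _ _ wf1 p.
have [K HK] := @mixed_even _ _ wf1 p pl1.
have HL : lk_smooth D1 p = K by rewrite /lk_smooth HK mulzK.
have lk1u : lk_smooth D1 (gmate D1 p) = K.
  by rewrite /lk_smooth (@mixed_swap _ _ wf1) HK mulzK.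
have mix2 : mixed_sum D2 p = mixed_sum D1 p.
  rewrite /mixed_sum; apply: eq_big => q; rewrite !Hmate.
    case: (eqVneq q p) => [->|h1]; first by rewrite /= ?andbF.
    case: (eqVneq q (gmate D1 p)) => [->|h2]; first by rewrite /= ?andbF.
    by case: (Hoth q h1 h2) => ->.
  move=> /and4P[_ h1 h2 _]; rewrite /sgnz; by case: (Hoth q h1 h2) => _ ->.
have lk2p : lk_smooth D2 p = K by rewrite /lk_smooth mix2 HK mulzK.
have lk2u : lk_smooth D2 (gmate D1 p) = K.
  by rewrite -Hmate /lk_smooth (@mixed_swap _ _ wf2) mix2 HK mulzK.
rewrite !H_eq [\sum_(q | gover D1 q) _]big_mkcond [\sum_(q | gover D2 q) _]big_mkcond /=.
rewrite !(@split_pu _ _ _ _ hu).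
have ov1 : gover D1 (gmate D1 p) = ~~ gover D1 p := @over_mate _ _ wf1 p.
have ov2 : gover D2 (gmate D1 p) = gover D1 p by rewrite -Hmate (@over_mate _ _ wf2) Hov negbK.
have ps1 : gpos D1 (gmate D1 p) = true by rewrite (@pos_mate _ _ wf1).
have ps2 : gpos D2 (gmate D1 p) = false by rewrite -Hmate (@pos_mate _ _ wf2).
rewrite ov1 ov2 Hov /sgnz Hp1 Hp2 ps1 ps2 HL lk1u lk2p lk2u.
set R1 := \sum_(i | _) (if gover D1 i then _ else _).
set R2 := \sum_(i | _) (if gover D2 i then _ else _).
have ER : R1 - R2 = mixed_sum D1 p.
  rewrite /R1 /R2 -sumrB.
  rewrite [RHS]/mixed_sum [RHS]big_mkcond [RHS](@split_pu _ _ _ _ hu) eqxx /= !andbF /= eqxx /= !andbF.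
  rewrite !add0r; apply: eq_bigr => q /andP[h1 h2]; rewrite h1 h2 /=.
  case: (Hoth q h1 h2) => -> ->.
  case: (gover D1 q) => /=; last by rewrite subrr.
  rewrite -mulrBr (@lk_diff _ _ _ p q wf1 wf2 Hmate Hoth Hov Hp1 Hp2 h1 h2).
  by case: (_ != _); rewrite /= ?mulr1 ?mulr0.
have ER' : R1 = K * 2 + R2 by rewrite -HK -ER subrK.
rewrite ER'.
by case: (gover D1 p); rewrite /= ?mul1r ?mulN1r ?addr0 ?add0r fin_alg.
Qed.
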